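(* Let $\beta\in(0,\tfrac12)$ and $\lambda_1(\beta)=\sup\mathcal{A}_\beta$. Then $\lambda_1(\beta)$ is a principal eigenvalue of $\Delta_\beta$. Moreover, there is an eigenfunction $u:\mathbb{T}_m\to\mathbb{R}$ associated with $\lambda_1(\beta)$ such that $u(\emptyset)=1$, $u>0$ on $\mathbb{T}_m$, $\Delta_\beta u+\lambda_1(\beta)u=0$ on $\mathbb{T}_m$, $\lim_{x\to y}u(x)=0$ for all $y\in\partial\mathbb{T}_m$, and $u$ is constant on each level and decreasing with respect to the level, i.e. $u(x)=f(|x|)$ for a decreasing $f:\mathbb{N}_0\to\mathbb{R}$.
   Context: Tree: for an integer $m\ge2$, the regular $m$-branching tree $\mathbb{T}_m$ has as vertices the root $\emptyset$ and all finite sequences $(\emptyset,a_1,\dots,a_k)$, $k\in\mathbb{N}$, $a_i\in\{0,\dots,m-1\}$. The level of $x=(\emptyset,a_1,\dots,a_k)$ is $|x|=k$ ($|\emptyset|=0$). The successors of $x$ are $(x,i)$, $i\in\{0,\dots,m-1\}$; for $x\ne\emptyset$, $\hat x$ denotes its unique immediate predecessor. A branch is an infinite sequence $(x_n)_{n\ge0}$ with $x_0=\emptyset$ and $x_{n+1}$ a successor of $x_n$; $\partial\mathbb{T}_m$ is the set of branches. For $y=(x_n)\in\partial\mathbb{T}_m$, $\lim_{x\to y}u(x)=L$ means $\lim_{n\to\infty}u(x_n)=L$. Operator: for $\beta\in[0,1)$ let $p_\beta=1$ if $\beta=0$ and $p_\beta=\beta/(1-\beta)$ if $\beta\in(0,1)$.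 For $u:\mathbb{T}_m\to\mathbb{R}$, $\Delta_\beta u(\emptyset)=\frac1m\sum_{i=0}^{m-1}u(\emptyset,i)-u(\emptyset)$ and, for $x\ne\emptyset$, $\Delta_\beta u(x)=\big(\beta u(\hat x)+\frac{1-\beta}{m}\sum_{i=0}^{m-1}u(x,i)-u(x)\big)p_\beta^{-|x|}$. Eigenvalues: $\lambda\in\mathbb{R}$ is an eigenvalue of $\Delta_\beta$ if there is a bounded $u:\mathbb{T}_m\to\mathbb{R}$, $u\not\equiv0$, with $-\Delta_\beta u=\lambda u$ on $\mathbb{T}_m$ and $\lim_{x\to y}u(x)=0$ for every $y\in\partial\mathbb{T}_m$ ($u$ is an eigenfunction). An eigenvalue $\lambda>0$ is principal if it has a non-negative eigenfunction. The set $\mathcal{A}_\beta$: $\mathcal{A}_\beta=\{\lambda>0:\exists v:\mathbb{T}_m\to\mathbb{R}\text{ and constants }0<c<C\text{ with } c<v<C \text{ on }\mathbb{T}_m \text{ and } \Delta_\beta v+\lambda v\le0 \text{ on }\mathbb{T}_m\}$, and $\lambda_1(\beta)=\sup\mathcal{A}_\beta$. *)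

(* Defs.v *)
From HB Require Import structures.
From mathcomp Require Import all_boot all_order all_algebra.
From mathcomp Require Import all_classical all_reals all_analysis.
Set Implicit Arguments. Unset Strict Implicit. Unset Printing Implicit Defensive.
Import Order.TTheory GRing.Theory Num.Theory.
Local Open Scope ring_scope.
Local Open Scope classical_set_scope.

(* Vertices of the m-branching tree T_m: finite words over 'I_m.
   Convention: the word is stored most-recent-letter first, i.e. the vertex
   (root, a1, ..., ak) is the list [:: ak; ...; a1].  Hence the successors of
   x are (i :: x), the predecessor of x <> root is (behead x), the root is
   [::], and the level |x| is (size x). *)
Definition vertex (m : nat) := seq 'I_m.
Definition level (m : nat) (x : vertex m) : nat := size x.

Definition pbeta (R : realType) (beta : R) : R :=
  if beta == 0 then 1 else beta / (1 - beta).

Definition Delta (R : realType) (m : nat) (beta : R) (u : vertex m -> R)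
  (x : vertex m) : R :=
  match x with
  | [::] => m%:R^-1 * (\sum_(i < m) u [:: i]) - u [::]
  | _ :: xh =>
      (beta * u xh + (1 - beta) / m%:R * (\sum_(i < m) u (i :: x)) - u x)
        * (pbeta beta ^- size x)
  end.

Definition is_branch (m : nat) (b : nat -> vertex m) : Prop :=
  b 0%N = [::] /\ forall n, exists i : 'I_m, b n.+1 = i :: b n.

Definition vanishes_at_boundary (R : realType) (m : nat) (u : vertex m -> R) : Prop :=
  forall b : nat -> vertex m, is_branch b -> ((fun n => u (b n) : R) @ \oo --> 0%R).

Definition is_eigenfunction (R : realType) (m : nat) (beta lam : R)
  (u : vertex m -> R) : Prop :=
  (exists C : R, forall x, `|u x| <= C) /\
  (exists x, u x != 0) /\
  (forall x, - Delta beta u x = lam * u x) /\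
  vanishes_at_boundary u.

Definition is_eigenvalue (R : realType) (m : nat) (beta lam : R) : Prop :=
  exists u : vertex m -> R, is_eigenfunction beta lam u.

Definition is_principal_eigenvalue (R : realType) (m : nat) (beta lam : R) : Prop :=
  0 < lam /\
  exists u : vertex m -> R, is_eigenfunction beta lam u /\ (forall x, 0 <= u x).

Definition Aset (R : realType) (m : nat) (beta : R) : set R :=
  [set lam | 0 < lam /\
     exists (v : vertex m -> R) (c C : R), 0 < c /\ c < C /\
       (forall x, c < v x /\ v x < C) /\
       (forall x, Delta beta v x + lam * v x <= 0)].

Definition lambda1 (R : realType) (m : nat) (beta : R) : R := sup (Aset m beta).

(* Main.v *)
Require Import Defs.
From HB Require Import structures.
From mathcomp Require Import all_boot all_order all_algebra.
From mathcomp Require Import all_classical all_reals all_analysis.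
From mathcomp Require Import ring lra.
Import Order.TTheory GRing.Theory Num.Theory.
Import numFieldNormedType.Exports.
Local Open Scope ring_scope.

Definition pp {R : realType} (b : R) : R := b / (1 - b).
Definition cc {R : realType} (b : R) : R := (1 - b)^-1.

Fixpoint FS {R : realType} (b l : R) (n : nat) : R * R :=
  match n with
  | 0 => (1, 1)
  | n'.+1 => let fs := FS b l n' in
             let f' := fs.1 - l * pp b ^+ n' * fs.2 in (f', fs.2 + cc b * f')
  end.
Definition Ff {R : realType} (b l : R) n := (FS b l n).1.
Definition Sf {R : realType} (b l : R) n := (FS b l n).2.

Lemma Ff0 {R : realType} (b l : R) : Ff b l 0 = 1. Proof. by []. Qed.
Lemma Sf0 {R : realType} (b l : R) : Sf b l 0 = 1. Proof. by []. Qed.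
Lemma FfS {R : realType} (b l : R) n :
  Ff b l n.+1 = Ff b l n - l * pp b ^+ n * Sf b l n.
Proof. by []. Qed.
Lemma SfS {R : realType} (b l : R) n :
  Sf b l n.+1 = Sf b l n + cc b * Ff b l n.+1.
Proof. by []. Qed.

Lemma Ff_cont {R : realType} (b : R) (n : nat) :
  continuous (fun l : R => Ff b l n) /\ continuous (fun l : R => Sf b l n).
Proof.
elim: n => [|n [IHf IHs]].
  by split => x; apply: cst_continuous.
have hf : continuous (fun l : R => Ff b l n.+1).
  move=> x; rewrite /Ff /=.
  have := @continuousB _ _ _ (fun l : R => Ff b l n) (fun l : R => l * pp b ^+ n * Sf b l n) x (IHf x).
  apply.
  have := @continuousM _ _ (fun l : R => l * pp b ^+ n) (fun l : R => Sf b l n) x _ (IHs x). apply.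
  have := @continuousM _ _ (fun l : R => l) (fun _ : R => pp b ^+ n) x _ _. apply.
  exact: cvg_id. exact: cst_continuous.
split => // x.
rewrite /Sf /=.
have := @continuousD _ _ _ (fun l : R => Sf b l n) (fun l : R => cc b * Ff b l n.+1) x (IHs x).
apply.
have := @continuousM _ _ (fun _ : R => cc b) (fun l : R => Ff b l n.+1) x _ (hf x). apply.
exact: cst_continuous.
Qed.
Set Implicit Arguments. Unset Strict Implicit.
Local Open Scope classical_set_scope.

Lemma geo_id {R : realType} (p : R) (n : nat) : p != 1 ->
  \sum_(k < n) (k.+1)%:R * p ^+ k = (1 - p ^+ n) / (1 - p) ^+ 2 - n%:R * p ^+ n / (1 - p).
Proof.
move=> hp; have hp' : 1 - p != 0 by rewrite subr_eq0 eq_sym.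
elim: n => [|n IH]; first by rewrite big_ord0 expr0 subrr !mul0r subr0.
rewrite big_ord_recr /= IH [p ^+ n.+1]exprS.
rewrite -natr1. field. exact: hp'.
Qed.

Lemma geo_le {R : realType} (p : R) (n : nat) : 0 <= p -> p < 1 ->
  \sum_(k < n) (k.+1)%:R * p ^+ k <= (1 - p) ^-2.
Proof.
move=> p0 p1; rewrite geo_id ?lt_eqF //.
have h1 : 0 < 1 - p by rewrite subr_gt0.
have hpn : 0 <= p ^+ n by rewrite exprn_ge0.
have hA : (1 - p ^+ n) / (1 - p) ^+ 2 <= (1 - p) ^-2.
  rewrite -[X in _ <= X]mul1r; apply: ler_wpM2r.
    by rewrite invr_ge0 exprn_ge0 // ltW.
  lra.
have hB : 0 <= n%:R * p ^+ n / (1 - p).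
  by apply: mulr_ge0; [apply: mulr_ge0 | rewrite invr_ge0 ltW].

lra.
Qed.


Lemma pp_gt0 {R : realType} (b : R) : 0 < b -> b < 1/2 -> 0 < pp b.
Proof. move=> h0 h1; rewrite /pp divr_gt0 //; lra. Qed.
Lemma pp_lt1 {R : realType} (b : R) : 0 < b -> b < 1/2 -> pp b < 1.
Proof. move=> h0 h1; rewrite /pp ltr_pdivrMr; lra. Qed.
Lemma cc_gt0 {R : realType} (b : R) : 0 < b -> b < 1/2 -> 0 < cc b.
Proof. move=> h0 h1; rewrite /cc invr_gt0; lra. Qed.
Lemma pp_eq {R : realType} (b : R) : 0 < b -> b < 1/2 -> (1 - b) * pp b = b.
Proof. move=> h0 h1; rewrite /pp; field; lra. Qed.
Lemma cc_eq {R : realType} (b : R) : 0 < b -> b < 1/2 -> (1 - b) * cc b = 1.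
Proof. move=> h0 h1; rewrite /cc divff //; lra. Qed.
Lemma pbeta_eq {R : realType} (b : R) : 0 < b -> pbeta b = pp b.
Proof. by move=> h0; rewrite /pbeta gt_eqF. Qed.

Lemma Sf_ge1 {R : realType} (b l : R) : 0 < b -> b < 1/2 ->
  (forall n, 0 <= Ff b l n) -> forall n, 1 <= Sf b l n.
Proof.
move=> h0 h1 hF; elim=> [|n IH]; first by rewrite Sf0.
rewrite SfS; have := hF n.+1; have := cc_gt0 h0 h1.
move=> hc hf; have : 0 <= cc b * Ff b l n.+1 by rewrite mulr_ge0 // ltW.
lra.
Qed.

Lemma Ff_decr {R : realType} (b l : R) n : 0 < b -> b < 1/2 -> 0 <= l ->
  (forall n, 0 <= Ff b l n) -> Ff b l n.+1 <= Ff b l n.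
Proof.
move=> h0 h1 hl hF; rewrite FfS; have := Sf_ge1 h0 h1 hF n.
have hp := pp_gt0 h0 h1.
move=> hS; have : 0 <= l * pp b ^+ n * Sf b l n.
  by rewrite !mulr_ge0 // ?exprn_ge0 ?ltW //; lra.
lra.
Qed.

Lemma Ff_sdecr {R : realType} (b l : R) n : 0 < b -> b < 1/2 -> 0 < l ->
  (forall n, 0 <= Ff b l n) -> Ff b l n.+1 < Ff b l n.
Proof.
move=> h0 h1 hl hF; rewrite FfS; have := Sf_ge1 h0 h1 hF n.
have hp := pp_gt0 h0 h1.
move=> hS; have : 0 < l * pp b ^+ n * Sf b l n.
  by rewrite !mulr_gt0 // ?exprn_gt0 //; lra.
lra.
Qed.

Lemma Ff_anti {R : realType} (b l : R) m n : 0 < b -> b < 1/2 -> 0 <= l ->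
  (forall n, 0 <= Ff b l n) -> (m <= n)%N -> Ff b l n <= Ff b l m.
Proof.
move=> h0 h1 hl hF /subnK <-; elim: (n - m)%N => [|k IH]; first by rewrite add0n.
rewrite addSn; apply: le_trans IH; exact: Ff_decr.
Qed.

Lemma Ff_le1 {R : realType} (b l : R) n : 0 < b -> b < 1/2 -> 0 <= l ->
  (forall n, 0 <= Ff b l n) -> Ff b l n <= 1.
Proof. by move=> h0 h1 hl hF; rewrite -(Ff0 b l); apply: Ff_anti. Qed.

Lemma Sf_le {R : realType} (b l : R) n : 0 < b -> b < 1/2 -> 0 <= l ->
  (forall n, 0 <= Ff b l n) -> Sf b l n <= 1 + cc b * n%:R.
Proof.
move=> h0 h1 hl hF; elim: n => [|n IH]; first by rewrite Sf0 mulr0 addr0.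
rewrite SfS -[(n.+1)%:R]natr1 [cc b * (_ + 1)]mulrDr.
have := Ff_le1 n.+1 h0 h1 hl hF; have hc := cc_gt0 h0 h1.
move=> h; have : cc b * Ff b l n.+1 <= cc b * 1 by rewrite ler_pM2l // ltW.
lra.
Qed.

Lemma Phi_id {R : realType} (b l0 l : R) n :
  l0 * Sf b l0 n * Ff b l n - l * Ff b l0 n * Sf b l n =
  - (l - l0) * (1 + cc b * \sum_(j < n) Ff b l0 j.+1 * Ff b l j.+1).
Proof.
elim: n => [|n IH]; first by rewrite big_ord0 !Sf0 !Ff0; ring.
rewrite big_ord_recr /=.
set s := \sum_(j < n) _.
set x := Ff b l0 n.+1 * Ff b l n.+1.
have -> : -(l - l0) * (1 + cc b * (s + x)) = -(l - l0) * (1 + cc b * s) - (l - l0) * cc b * x by ring.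
rewrite -IH /x !SfS.
set h1 := Ff b l0 n.+1; set g1 := Ff b l n.+1.
have eh : h1 = Ff b l0 n - l0 * pp b ^+ n * Sf b l0 n by [].
have eg : g1 = Ff b l n - l * pp b ^+ n * Sf b l n by [].
rewrite eh eg. ring.
Qed.

Lemma ratio_step {R : realType} (b l0 l : R) n :
  Ff b l0 n != 0 -> Ff b l0 n.+1 != 0 ->
  Ff b l n.+1 / Ff b l0 n.+1 = Ff b l n / Ff b l0 n
   - (l - l0) * pp b ^+ n * (1 + cc b * \sum_(j < n) Ff b l0 j.+1 * Ff b l j.+1)
     / (Ff b l0 n * Ff b l0 n.+1).
Proof.
move=> hn hn1.
set U := (1 + _).
have hU : (l - l0) * U = - (l0 * Sf b l0 n * Ff b l n - l * Ff b l0 n * Sf b l n).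
  by rewrite Phi_id; rewrite /U; ring.
have -> : (l - l0) * pp b ^+ n * U = pp b ^+ n * ((l - l0) * U) by ring.
rewrite hU !FfS.
field. by rewrite -FfS hn hn1.
Qed.

Lemma pert {R : realType} (b l0 L : R) : 0 < b -> b < 1/2 -> 0 <= l0 -> 0 < L ->
  (forall n, L <= Ff b l0 n) ->
  exists l, l0 < l /\ 0 <= l /\ forall n, 0 < Ff b l n.
Proof.
move=> hb0 hb1 hl0 hL hLF.
have hc := cc_gt0 hb0 hb1; have hp0 := pp_gt0 hb0 hb1; have hp1 := pp_lt1 hb0 hb1.
have hF0 : forall n, 0 <= Ff b l0 n by move=> n; apply: le_trans (hLF n); apply: ltW.
have hh1 : forall n, Ff b l0 n <= 1 by move=> n; apply: Ff_le1.
have hS1 : forall n, 1 <= Sf b l0 n by apply: Sf_ge1.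
set B := (1 + cc b) * (1 - pp b) ^-2.
have hB : 0 < B.
  rewrite /B mulr_gt0 // ?invr_gt0 ?exprn_gt0 //; lra.
have hA : forall n, \sum_(k < n) pp b ^+ k * Sf b l0 k <= B.
  move=> n; apply: le_trans (_ : \sum_(k < n) (1 + cc b) * ((k.+1)%:R * pp b ^+ k) <= B).
    apply: ler_sum => k _.
    have hk := Sf_le k hb0 hb1 hl0 hF0.
    have hpk : 0 <= pp b ^+ k by rewrite exprn_ge0 // ltW.
    have hkn : 0 <= k%:R :> R by [].
    have -> : (1 + cc b) * ((k.+1)%:R * pp b ^+ k) = pp b ^+ k * ((1 + cc b) * (k%:R + 1)).
      by rewrite -[(k.+1)%:R]natr1; ring.
    apply: ler_wpM2l => //.
    apply: le_trans hk _.
    have := ltW hc; lra.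
  rewrite -mulr_sumr /B; apply: ler_wpM2l; first lra.
  by apply: geo_le; [apply: ltW|].
set d := L ^+ 2 / (2 * B).
have hd : 0 < d by rewrite /d divr_gt0 ?exprn_gt0 // mulr_gt0.
have hdB : d / L ^+ 2 * B = 1 / 2.
  rewrite /d; field; rewrite ?expf_neq0 ?gt_eqF //. 
exists (l0 + d); split; first lra.
split; first lra.
set l := l0 + d.
have hll : l - l0 = d by rewrite /l; ring.
suff P : forall n, 0 < Ff b l n /\ Ff b l n <= 1 /\ 0 <= Sf b l n /\
    0 < 1 + cc b * \sum_(j < n) Ff b l0 j.+1 * Ff b l j.+1 /\
    1 + cc b * \sum_(j < n) Ff b l0 j.+1 * Ff b l j.+1 <= Sf b l0 n /\
    1 - d / L ^+ 2 * \sum_(k < n) pp b ^+ k * Sf b l0 k <= Ff b l n / Ff b l0 n.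
  by move=> n; case: (P n).
elim=> [|n [g0 [g1 [sg0 [u0 [u1 r0]]]]]].
  rewrite !big_ord0 !Ff0 !Sf0 mulr0 addr0 divr1 mulr0 subr0.
  by do !split => //; lra.
set U := 1 + cc b * \sum_(j < n) Ff b l0 j.+1 * Ff b l j.+1 in u0 u1 *.
have hh : 0 < Ff b l0 n by apply: lt_le_trans (hLF n).
have hh' : 0 < Ff b l0 n.+1 by apply: lt_le_trans (hLF n.+1).
have rs := @ratio_step R b l0 l n (lt0r_neq0 hh) (lt0r_neq0 hh').
rewrite hll in rs.
have hpn : 0 <= pp b ^+ n by rewrite exprn_ge0 // ltW.
have bnd : d * pp b ^+ n * U / (Ff b l0 n * Ff b l0 n.+1)
           <= d / L ^+ 2 * (pp b ^+ n * Sf b l0 n).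
  have hhh : 0 < Ff b l0 n * Ff b l0 n.+1 by rewrite mulr_gt0.
  rewrite ler_pdivrMr //.
  have hX : 0 <= d * pp b ^+ n by rewrite mulr_ge0 // ltW.
  apply: le_trans (_ : d * pp b ^+ n * Sf b l0 n <= _).
    by apply: ler_wpM2l.
  have -> : d / L ^+ 2 * (pp b ^+ n * Sf b l0 n) * (Ff b l0 n * Ff b l0 n.+1)
     = d * pp b ^+ n * Sf b l0 n * ((Ff b l0 n * Ff b l0 n.+1) / L ^+ 2).
    by rewrite /=; ring.
  have hY : 0 <= d * pp b ^+ n * Sf b l0 n.
    by rewrite mulr_ge0 // (le_trans _ (hS1 n)).
  rewrite ler_peMr //.
  rewrite ler_pdivlMr ?exprn_gt0 // mul1r expr2.
  by apply: ler_pM; [apply: ltW|apply: ltW|apply: hLF|apply: hLF].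
have r1 : 1 - d / L ^+ 2 * \sum_(k < n.+1) pp b ^+ k * Sf b l0 k
          <= Ff b l n.+1 / Ff b l0 n.+1.
  rewrite big_ord_recr /= rs mulrDr -/U; lra.
have g1pos : 0 < Ff b l n.+1.
  have : 1 / 2 <= Ff b l n.+1 / Ff b l0 n.+1.
    apply: le_trans r1; rewrite -hdB.
    have := hA n.+1; have hdl : 0 <= d / L ^+ 2 by rewrite divr_ge0 ?exprn_ge0 ?ltW.
    move=> hA1; have := ler_wpM2l hdl hA1; lra.
  rewrite ler_pdivlMr //; move=> h; have : 0 < 1 / 2 * Ff b l0 n.+1 by rewrite mulr_gt0.
  lra.
have g1le : Ff b l n.+1 <= Ff b l n.
  rewrite FfS; have : 0 <= l * pp b ^+ n * Sf b l n.
    by rewrite !mulr_ge0 //; rewrite /l; lra.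
  lra.
refine (conj _ (conj _ (conj _ (conj _ (conj _ _))))).
- exact: g1pos.
- lra.
- rewrite SfS; have : 0 <= cc b * Ff b l n.+1 by rewrite mulr_ge0 // ltW.
  lra.
- rewrite big_ord_recr /= mulrDr addrA; have : 0 < cc b * (Ff b l0 n.+1 * Ff b l n.+1).
    by rewrite !mulr_gt0.
  rewrite -/U; lra.
- rewrite big_ord_recr /= mulrDr addrA SfS -/U.
  have : cc b * (Ff b l0 n.+1 * Ff b l n.+1) <= cc b * Ff b l0 n.+1.
    apply: ler_wpM2l; first exact: ltW.
    rewrite -[X in _ <= X]mulr1; apply: ler_wpM2l => //; lra.
  lra.
- exact: r1.
Qed.

Definition Qs {R : realType} (b : R) : set R :=
  [set l | 0 <= l /\ forall n, 0 < Ff b l n].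
Definition lstar {R : realType} (b : R) : R := sup (Qs b).

Lemma Ff_zero {R : realType} (b : R) n : Ff b 0 n = 1.
Proof. by elim: n => [|n IH] //; rewrite FfS IH !mul0r subr0. Qed.

Lemma Qs0 {R : realType} (b : R) : Qs b 0.
Proof. by split => // n; rewrite Ff_zero. Qed.

Lemma Qs_ub {R : realType} (b : R) : ubound (Qs b) 1.
Proof.
move=> l [_ h]; have := h 1%N; rewrite FfS Ff0 Sf0 expr0 !mulr1; lra.
Qed.

Lemma Qs_has_sup {R : realType} (b : R) : has_sup (Qs b).
Proof. by split; [exists 0; apply: Qs0 | exists 1; apply: Qs_ub]. Qed.

Lemma lstar_pos {R : realType} (b : R) : 0 < b -> b < 1/2 -> 0 < lstar b.
Proof.
move=> h0 h1.
have eq_ler : forall x y : R, x = y -> x <= y by move=> x y ->.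
have [l [hl [hl0 hF]]] := @pert R b 0 1 h0 h1 (lexx 0) ltr01 (fun n => eq_ler _ _ (esym (Ff_zero b n))).
apply: lt_le_trans hl _; apply: sup_upper_bound; first exact: Qs_has_sup.
by split.
Qed.

Lemma Fstar_ge0 {R : realType} (b : R) n : 0 < b -> b < 1/2 -> 0 <= Ff b (lstar b) n.
Proof.
move=> h0 h1; rewrite leNgt; apply/negP => hneg.
have hc := (proj1 (Ff_cont b n)) (lstar b).
have hnear := @cvgr_lt R R (nbhs (lstar b)) _ (fun l => Ff b l n) (Ff b (lstar b) n) hc 0 hneg.
have /nbhs_ballP [e he hball] : nbhs (lstar b) [set l | Ff b l n < 0] by exact: hnear.
have [l hQ hl] := sup_adherent he (Qs_has_sup b).
have hle : l <= lstar b by apply: sup_upper_bound; [exact: Qs_has_sup|].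
have : [set l | Ff b l n < 0] l.
  apply: hball; rewrite -ball_normE /ball_ /= ger0_norm; rewrite /lstar in hl hle *; lra.
rewrite /=; have := (proj2 hQ) n; lra.
Qed.

Lemma Fstar_pos {R : realType} (b : R) n : 0 < b -> b < 1/2 -> 0 < Ff b (lstar b) n.
Proof.
move=> h0 h1; have hge := fun k => Fstar_ge0 k h0 h1.
rewrite lt_neqAle hge andbT; apply/negP => /eqP h.
have := hge n.+1; rewrite FfS -h sub0r oppr_ge0 => hle.
have hS := Sf_ge1 h0 h1 hge n.
have : 0 < lstar b * pp b ^+ n * Sf b (lstar b) n.
  by rewrite !mulr_gt0 ?lstar_pos ?exprn_gt0 ?pp_gt0 //; lra.
lra.
Qed.

Lemma lstar_Q {R : realType} (b : R) : 0 < b -> b < 1/2 -> Qs b (lstar b).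
Proof.
move=> h0 h1; split; first exact: ltW (lstar_pos h0 h1).
by move=> n; apply: Fstar_pos.
Qed.

Lemma Fstar_small {R : realType} (b : R) (e : R) : 0 < b -> b < 1/2 -> 0 < e ->
  exists n, Ff b (lstar b) n < e.
Proof.
move=> h0 h1 he; apply/not_existsP => H.
have hL : forall n, e <= Ff b (lstar b) n by move=> n; have := H n; rewrite ltNge => /negP/negbNE.
have [l [hl [hl0 hF]]] := pert h0 h1 (ltW (lstar_pos h0 h1)) he hL.
have : l <= lstar b by apply: sup_upper_bound; [exact: Qs_has_sup|split].
lra.
Qed.

Definition DR {R : realType} (b : R) (phi : nat -> R) (k : nat) : R :=
  if k is k'.+1 then (b * phi k' + (1 - b) * phi k.+1 - phi k) * pbeta b ^- k
  else phi 1%N - phi 0%N.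

Lemma Delta_rad {R : realType} (m : nat) (b : R) (phi : nat -> R) (x : vertex m) :
  (0 < m)%N -> Delta b (fun y : vertex m => phi (size y)) x = DR b phi (size x).
Proof.
move=> hm; have hm' : (m%:R : R) != 0 by rewrite pnatr_eq0 -lt0n.
case: x => [|a xh] /=.
  by rewrite sumr_const card_ord -[phi 1%N *+ m]mulr_natr; field.
rewrite sumr_const card_ord -[phi _ *+ m]mulr_natr; congr (_ * _).
congr (_ - _); congr (_ + _).
by field.
Qed.

Lemma DR_star {R : realType} (b : R) k : 0 < b -> b < 1/2 ->
  DR b (Ff b (lstar b)) k + lstar b * Ff b (lstar b) k = 0.
Proof.
move=> h0 h1; set l := lstar b.
case: k => [|k] /=.
  rewrite FfS Ff0 Sf0 expr0; ring.
rewrite pbeta_eq //.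
have e2 : Ff b l k.+2 = Ff b l k.+1 - l * pp b ^+ k.+1 * Sf b l k.+1 by [].
have e3 : Sf b l k.+1 = Sf b l k + cc b * Ff b l k.+1 by [].
have e1 : Ff b l k = Ff b l k.+1 + l * pp b ^+ k * Sf b l k by rewrite FfS; ring.
rewrite e2 e3 e1.
set f1 := Ff b l k.+1; set s0 := Sf b l k.
have hP : pp b ^+ k != 0 by rewrite expf_neq0 // gt_eqF // pp_gt0.
rewrite exprS; move: hP; set P := pp b ^+ k => hP.
rewrite /pp /cc. field.
rewrite hP /=; apply/andP; split; rewrite ?mulf_neq0 ?invr_neq0 ?gt_eqF //; lra.
Qed.

Lemma Delta_lin {R : realType} (m : nat) (b t : R) (v u : vertex m -> R) x :
  Delta b (fun y => t * v y - u y) x = t * Delta b v x - Delta b u x.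
Proof.
by case: x => [|a xh] /=; rewrite sumrB -mulr_sumr; ring.
Qed.

Lemma Delta_ge {R : realType} (m : nat) (b : R) (w : vertex m -> R) x :
  0 < b -> b < 1/2 -> (forall y, 0 <= w y) ->
  - w x * pbeta b ^- size x <= Delta b w x.
Proof.
move=> h0 h1 hw.
have hs : forall z : vertex m, 0 <= \sum_(i < m) w (i :: z) by move=> z; apply: sumr_ge0.
case: x => [|a xh] /=.
  rewrite expr0 invr1 mulr1.
  have : 0 <= m%:R^-1 * \sum_(i < m) w [:: i] by rewrite mulr_ge0 ?invr_ge0.
  lra.
apply: ler_wpM2r.
  by rewrite invr_ge0 exprn_ge0 // pbeta_eq // ltW // pp_gt0.
have := hw xh; have := hs (a :: xh).
move=> h2 h3.
have : 0 <= (1 - b) / m%:R * \sum_(i < m) w (i :: a :: xh).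
  by rewrite !mulr_ge0 ?invr_ge0 //; lra.
have : 0 <= b * w xh by rewrite mulr_ge0 // ltW.
lra.
Qed.

Lemma ustar_eq {R : realType} (m : nat) (b : R) (x : vertex m) : (0 < m)%N -> 0 < b -> b < 1/2 ->
  Delta b (fun y : vertex m => Ff b (lstar b) (size y)) x
    = - lstar b * Ff b (lstar b) (size x).
Proof.
move=> hm h0 h1; rewrite Delta_rad //; have := DR_star (size x) h0 h1; lra.
Qed.

Lemma A_le {R : realType} (m : nat) (b : R) (v : vertex m -> R) (c0 C l : R) :
  (0 < m)%N -> 0 < b -> b < 1/2 -> 0 < l -> 0 < c0 ->
  (forall x, c0 < v x /\ v x < C) ->
  (forall x, Delta b v x + l * v x <= 0) -> l <= lstar b.
Proof.
move=> hm h0 h1 hl hc0 hv hD.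
rewrite leNgt; apply/negP => hlt.
set ls := lstar b.
set u := fun y : vertex m => Ff b ls (size y).
have hu0 : forall x, 0 < u x by move=> x; apply: Fstar_pos.
have hu1 : forall x, u x <= 1.
  move=> x; apply: Ff_le1 => //; first exact: ltW (lstar_pos h0 h1).
  by move=> n; apply: ltW; apply: Fstar_pos.
have hvp : forall x, 0 < v x by move=> x; apply: lt_trans (proj1 (hv x)).
have hC : 0 < C by apply: lt_trans (proj2 (hv [::])).
set E := [set r | exists x, r = u x / v x].
have hE : has_sup E.
  split; first by exists (u [::] / v [::]); exists [::].
  exists c0^-1 => r [x ->].
  rewrite ler_pdivrMr // mulrC ler_pdivlMr //.
  have : u x * c0 <= 1 * c0 by apply: ler_wpM2r; [apply: ltW|apply: hu1].
  have := proj1 (hv x); lra.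
set t := sup E.
have htE : forall x, u x <= t * v x.
  move=> x; rewrite -ler_pdivrMr //; apply: sup_upper_bound => //; by exists x.
have ht : 0 < t.
  have := htE [::]; have := hu0 [::]; have := hvp [::] => a b' c.
  have : 0 < t * v [::] by apply: lt_le_trans c.
  by rewrite pmulr_lgt0.
have [N hN] := Fstar_small (e := t * c0 / 2) h0 h1 (ltac:(by rewrite !mulr_gt0)).
have hp0 := pp_gt0 h0 h1; have hp1 := pp_lt1 h0 h1.
have hpN : 0 < pp b ^+ N by rewrite exprn_gt0.
set eps := Num.min (t / 2) ((l - ls) * t * c0 * pp b ^+ N / (2 * C)).
have heps : 0 < eps.
  rewrite /eps lt_min; apply/andP; split; first by rewrite divr_gt0.
  by rewrite !mulr_gt0 ?invr_gt0 ?subr_gt0 ?mulr_gt0.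
have heps1 : eps <= t / 2 by rewrite /eps ge_min lexx.
have heps2 : eps <= (l - ls) * t * c0 * pp b ^+ N / (2 * C)
  by rewrite /eps ge_min lexx orbT.
have [r [x0 ->] hr] := sup_adherent heps hE.
have hux0 : (t - eps) * v x0 < u x0 by rewrite -ltr_pdivlMr.
have hux1 : t * c0 / 2 < u x0.
  apply: le_lt_trans hux0.
  have : t / 2 <= t - eps by lra.
  move=> h; apply: le_trans (_ : t / 2 * v x0 <= _).
    rewrite mulrAC; apply: ler_wpM2l; first by rewrite divr_ge0 // ltW.
    exact: ltW (proj1 (hv x0)).
  by apply: ler_wpM2r => //; apply: ltW.
have hk : (size x0 < N)%N.
  rewrite ltnNge; apply/negP => hNk.
  have : u x0 <= Ff b ls N.
    apply: Ff_anti => //; first exact: ltW (lstar_pos h0 h1).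
    by move=> n; apply: ltW; apply: Fstar_pos.
  lra.
set w := fun y => t * v y - u y.
have hw : forall y, 0 <= w y by move=> y; rewrite /w subr_ge0.
have hwx : w x0 < eps * C.
  rewrite /w; apply: lt_le_trans (_ : eps * v x0 <= _).
    lra.
  by apply: ler_wpM2l; [apply: ltW | apply: ltW; apply: (proj2 (hv x0))].
have hDw := Delta_ge x0 h0 h1 hw.
rewrite /w Delta_lin ustar_eq // -/u in hDw.
have hDv := hD x0.
set P := pbeta b ^- size x0.
have hP0 : 0 < P by rewrite /P pbeta_eq // invr_gt0 exprn_gt0.
have hPN : P <= (pp b ^+ N)^-1.
  rewrite /P pbeta_eq // lef_pV2 ?posrE ?exprn_gt0 //.
  apply: ler_wiXn2l; [exact: ltW | exact: ltW | exact: ltnW].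
have key : (l - ls) * u x0 <= w x0 * P.
  have : t * Delta b v x0 <= - l * (t * v x0) by
    rewrite mulNr mulrCA -mulrN; apply: ler_wpM2l; [exact: ltW | lra].
  have : l * u x0 <= l * (t * v x0) by apply: ler_wpM2l; [exact: ltW | exact: htE].
  rewrite /w; move=> a1 a2.
  have : - (t * v x0 - u x0) * P <= t * Delta b v x0 - - ls * u x0 by [].
  rewrite mulNr; move=> a3.
  rewrite /ls in a3 *; lra.
have : w x0 * P <= eps * C * (pp b ^+ N)^-1.
  apply: ler_pM; [exact: hw | exact: ltW | exact: ltW | exact: hPN].
have : eps * C * (pp b ^+ N)^-1 <= (l - ls) * (t * c0 / 2).
  have -> : (l - ls) * (t * c0 / 2) =
     (l - ls) * t * c0 * pp b ^+ N / (2 * C) * C * (pp b ^+ N)^-1.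
    by field; rewrite !gt_eqF.
  apply: ler_wpM2r; first by rewrite invr_ge0 ltW.
  by apply: ler_wpM2r; [apply: ltW|].
have : (l - ls) * (t * c0 / 2) < (l - ls) * u x0.
  by rewrite ltr_pM2l ?subr_gt0.
lra.
Qed.

Lemma bern {R : realType} (x : R) n : 1 <= x -> 1 + n%:R * (x - 1) <= x ^+ n.
Proof.
move=> hx; elim: n => [|n IH]; first by rewrite mul0r addr0 expr0.
rewrite exprS -[(n.+1)%:R]natr1.
have h1 : x * (1 + n%:R * (x - 1)) <= x * x ^+ n by apply: ler_wpM2l => //; lra.
have h2 : 0 <= n%:R * ((x - 1) * (x - 1)) by rewrite mulr_ge0 // mulr_ge0 //; lra.
have : x * (1 + n%:R * (x - 1)) = 1 + (n%:R + 1) * (x - 1) + n%:R * ((x - 1) * (x - 1)) by ring.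
lra.
Qed.

Lemma DR_lin {R : realType} (b d : R) (f g : nat -> R) k :
  DR b (fun k => f k + d * g k) k = DR b f k + d * DR b g k.
Proof. by case: k => [|k] /=; ring. Qed.

Definition qq {R : realType} (b : R) := (1 + pp b) / 2.

Lemma DR_g {R : realType} (b : R) k : 0 < b -> b < 1/2 ->
  let q := qq b in
  DR b (fun k => 1 + q ^+ k) k <= - ((1 - b) * (1 - q) * (q - pp b) / q) * (q / pp b) ^+ k.
Proof.
move=> h0 h1; rewrite /=; set q := qq b.
have hp0 := pp_gt0 h0 h1; have hp1 := pp_lt1 h0 h1.
have hq0 : 0 < q by rewrite /q /qq; lra.
have hq1 : q < 1 by rewrite /q /qq; lra.
have hqp : pp b < q by rewrite /q /qq; lra.
case: k => [|k] /=.
  rewrite !expr0 expr1 mulr1.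
  have : (1 - b) * (q - pp b) / q <= 1.
    rewrite ler_pdivrMr // mul1r.
    have : (1 - b) * (q - pp b) <= 1 * (q - pp b) by apply: ler_wpM2r; lra.
    lra.
  move=> h.
  have : (1 - q) * ((1 - b) * (q - pp b) / q) <= (1 - q) * 1 by apply: ler_wpM2l; lra.
  have -> : (1 - b) * (1 - q) * (q - pp b) / q = (1 - q) * ((1 - b) * (q - pp b) / q) by ring.
  lra.
rewrite le_eqVlt; apply/orP; left; apply/eqP.
rewrite pbeta_eq // [(q / pp b) ^+ _]expr_div_n.
have hP : pp b ^+ k != 0 by rewrite expf_neq0 // gt_eqF.
rewrite !exprS; move: hP; set P := pp b ^+ k => hP; set Q := q ^+ k.
have hq2 : q = (1 + pp b) / 2 by [].
clearbody Q P q; subst q.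
rewrite /pp; field.
apply/and4P; split; [apply: lt0r_neq0; lra | exact: hP | apply: lt0r_neq0; lra | apply: lt0r_neq0; lra].
Qed.


Lemma A_ge {R : realType} (m : nat) (b l : R) : (0 < m)%N -> 0 < b -> b < 1/2 ->
  0 < l -> l < lstar b -> Aset m b l.
Proof.
move=> hm h0 h1 hl hls.
set ls := lstar b.
have hls0 : 0 < ls := lstar_pos h0 h1.
have hFp : forall k, 0 < Ff b ls k by move=> k; apply: Fstar_pos.
have hF1 : forall k, Ff b ls k <= 1.
  by move=> k; apply: Ff_le1 => //; [apply: ltW | move=> n; apply: ltW].
have hFa : forall j k, (j <= k)%N -> Ff b ls k <= Ff b ls j.
  by move=> j k hjk; apply: Ff_anti => //; [apply: ltW | move=> n; apply: ltW].
have hp0 := pp_gt0 h0 h1; have hp1 := pp_lt1 h0 h1.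
set q := qq b.
have hq0 : 0 < q by rewrite /q /qq; lra.
have hq1 : q < 1 by rewrite /q /qq; lra.
have hqp : pp b < q by rewrite /q /qq; lra.
set K := (1 - b) * (1 - q) * (q - pp b) / q.
have hK : 0 < K by rewrite /K !mulr_gt0 ?invr_gt0 //; lra.
set r := q / pp b.
have hr : 1 < r by rewrite /r ltr_pdivlMr // mul1r.
set x0 := 2 * l / (K * (r - 1)).
have hx0 : 0 <= x0 by apply: divr_ge0; [lra | apply: mulr_ge0; [apply: ltW | lra]].
have hN := archi_boundP hx0.
set N := Num.Def.archi_bound x0 in hN.
have hKN : 2 * l <= K * r ^+ N.
  have hb := bern N (ltW hr).
  move: hN; rewrite /x0 ltr_pdivrMr; last by rewrite mulr_gt0 //; lra.
  move=> hN.
  have : K * (N%:R * (r - 1)) <= K * r ^+ N by apply: ler_wpM2l; [apply: ltW | lra].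
  have : N%:R * (K * (r - 1)) = K * (N%:R * (r - 1)) by ring.
  lra.
set d := (ls - l) * Ff b ls N / (2 * l).
have hd : 0 < d by apply: mulr_gt0; [apply: mulr_gt0; [rewrite subr_gt0 | apply: hFp] | rewrite invr_gt0; lra].
set phi := fun k => Ff b ls k + d * (1 + q ^+ k).
have hqk0 : forall k, 0 < q ^+ k by move=> k; rewrite exprn_gt0.
have hqk1 : forall k, q ^+ k <= 1 by move=> k; rewrite exprn_ile1 // ltW.
split => //.
exists (fun x : vertex m => phi (size x)), (d / 2), (2 + 2 * d).
split; first by rewrite divr_gt0.
split; first lra.
split.
  move=> x; rewrite /phi; set k := size x.
  have := hFp k; have := hF1 k; have := hqk0 k; have := hqk1 k.
  move=> a1 a2 a3 a4.
  have : 0 < d * q ^+ k by rewrite mulr_gt0.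
  have : d * q ^+ k <= d * 1 by apply: ler_wpM2l; [apply: ltW|].
  move=> a5 a6; split; rewrite mulrDr mulr1; lra.
move=> x; rewrite Delta_rad // /phi DR_lin.
set k := size x.
have e1 := DR_star k h0 h1.
have e2 := DR_g k h0 h1; rewrite /= -/q -/K -/r in e2.
have e3 : d * DR b (fun k => 1 + q ^+ k) k <= d * (- K * r ^+ k) by apply: ler_wpM2l; [apply: ltW|].
have e4 : l * (d * (1 + q ^+ k)) <= 2 * l * d.
  have := hqk1 k => a; have : l * (d * (1 + q ^+ k)) <= l * (d * 2).
    by apply: ler_wpM2l; [apply: ltW| apply: ler_wpM2l; [apply: ltW| lra]].
  lra.
have e5 : l * (Ff b ls k + d * (1 + q ^+ k)) = l * Ff b ls k + l * (d * (1 + q ^+ k))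
  by ring.
rewrite e5.
have e6 : d * (- K * r ^+ k) = - (d * (K * r ^+ k)) by ring.
rewrite e6 in e3.
rewrite -/ls in e1.
case: (leqP N k) => hk.
  have : K * r ^+ N <= K * r ^+ k by apply: ler_wpM2l; [apply: ltW | apply: ler_weXn2l => //; apply: ltW].
  move=> a.
  have : 2 * l * d <= d * (K * r ^+ k).
    rewrite mulrC; apply: ler_wpM2l; [exact: ltW hd|lra].
  have : l * Ff b ls k <= ls * Ff b ls k by apply: ler_wpM2r; [exact: ltW (hFp k) | exact: ltW].
  lra.
have hdN : 2 * l * d = (ls - l) * Ff b ls N by rewrite /d; field; lra.
have : (ls - l) * Ff b ls N <= (ls - l) * Ff b ls k.
  by apply: ler_wpM2l; [rewrite subr_ge0; exact: ltW | apply: hFa; exact: (leq_trans (leqnSn k) hk)].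
have : 0 <= d * (K * r ^+ k) by apply: mulr_ge0; [exact: ltW hd | apply: mulr_ge0; [exact: ltW hK | apply: exprn_ge0; lra]].
lra.
Qed.

Lemma lambda1_eq {R : realType} (m : nat) (b : R) : (2 <= m)%N -> 0 < b -> b < 1/2 ->
  lambda1 m b = lstar b.
Proof.
move=> hm h0 h1; have hm0 : (0 < m)%N by apply: leq_trans hm.
have hls := lstar_pos h0 h1.
have ub : ubound (Aset m b) (lstar b).
  move=> l [hl [v [c [C [hc [hcC [hv hD]]]]]]].
  exact: (A_le hm0 h0 h1 hl hc hv hD).
have hA2 : Aset m b (lstar b / 2).
  by apply: A_ge => //; lra.
have ne : Aset m b !=set0 by exists (lstar b / 2).
have hs : has_sup (Aset m b) by split => //; exists (lstar b).
apply/eqP; rewrite eq_le; apply/andP; split; first exact: ge_sup.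
rewrite leNgt; apply/negP => hlt.
have h2 : lstar b / 2 <= lambda1 m b by apply: sup_upper_bound.
have : Aset m b ((lambda1 m b + lstar b) / 2) by apply: A_ge => //; lra.
move=> /(sup_upper_bound hs) h3.
rewrite /lambda1 in h2 hlt h3 *; lra.
Qed.

Theorem theorem1p2' (R : realType) (m : nat) (beta : R) :
  (2 <= m)%N -> 0 < beta -> beta < 1 / 2 ->
  is_principal_eigenvalue m beta (lambda1 m beta) /\
  exists u : vertex m -> R,
    is_eigenfunction beta (lambda1 m beta) u /\
    u [::] = 1 /\
    (forall x, 0 < u x) /\
    (forall x, Delta beta u x + lambda1 m beta * u x = 0) /\
    vanishes_at_boundary u /\
    exists f : nat -> R,
      (forall x, u x = f (level x)) /\ (forall n, f n.+1 < f n).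
Proof.
move=> hm h0 h1; have hm0 : (0 < m)%N by apply: leq_trans hm.
rewrite lambda1_eq //.
set ls := lstar beta.
have hls : 0 < ls := lstar_pos h0 h1.
set u := fun x : vertex m => Ff beta ls (size x).
have hFp : forall k, 0 < Ff beta ls k by move=> k; apply: Fstar_pos.
have hF1 : forall k, Ff beta ls k <= 1.
  by move=> k; apply: Ff_le1 => //; [apply: ltW | move=> n; apply: ltW].
have hFa : forall j k, (j <= k)%N -> Ff beta ls k <= Ff beta ls j.
  by move=> j k hjk; apply: Ff_anti => //; [apply: ltW | move=> n; apply: ltW].
have hD : forall x, Delta beta u x = - ls * u x by move=> x; apply: ustar_eq.
have hvan : vanishes_at_boundary u.
  move=> br [hb0 hbS].
  have hsz : forall n, size (br n) = n.
    elim=> [|n IH]; first by rewrite hb0.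
    by have [i ->] := hbS n; rewrite /= IH.
  rewrite /u; under eq_fun do rewrite hsz.
  apply/cvgrPdist_lt => e he.
  have [N hN] := Fstar_small h0 h1 he.
  exists N => // n /= hNn.
  rewrite sub0r normrN ger0_norm; last exact: ltW.
  by apply: le_lt_trans hN; apply: hFa.
have heig : is_eigenfunction beta ls u.
  split; first by exists 1 => x; rewrite /u ger0_norm; [exact: hF1 | exact: ltW (hFp _)].
  split; first by exists [::]; rewrite /u /= Ff0 oner_neq0.
  split => // x; rewrite hD; ring.
split.
  split => //; exists u; split => // x; exact: ltW (hFp _).
exists u; split => //; split; first by rewrite /u /= Ff0.
split; first by move=> x; apply: hFp.
split; first by move=> x; rewrite hD; ring.
split => //; exists (Ff beta ls); split => // n.
apply: Ff_sdecr => // k; exact: ltW (hFp _).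
Qed.

Unset Implicit Arguments. Set Strict Implicit.
Local Close Scope classical_set_scope.

Theorem theorem1p2 (R : realType) (m : nat) (beta : R) :
  (2 <= m)%N -> 0 < beta -> beta < 1 / 2 ->
  is_principal_eigenvalue m beta (lambda1 m beta) /\
  exists u : vertex m -> R,
    is_eigenfunction beta (lambda1 m beta) u /\
    u [::] = 1 /\
    (forall x, 0 < u x) /\
    (forall x, Delta beta u x + lambda1 m beta * u x = 0) /\
    vanishes_at_boundary u /\
    exists f : nat -> R,
      (forall x, u x = f (level x)) /\ (forall n, f n.+1 < f n).
Proof. exact: theorem1p2'. Qed.
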